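(* Let $\lambda\in\mathbb C$ and put $(\lambda_i,\beta_i)=\Phi^i(\lambda,0)$ for $i\ge 0$ (so $\lambda_0=\lambda$, $\beta_0=0$). Let $n\ge 0$ and suppose that the weights $(\lambda_0,\beta_0),\dots,(\lambda_n,\beta_n)$ are pairwise distinct, $\beta_i\neq 0$ for $1\le i\le n$, and $\beta_{n+1}=0$. Let $F_{\mathrm{hw}}(\lambda)$ be the $(n+1)$-dimensional $L$-module with basis $v_0,\dots,v_n$ and action $hv_i=\lambda_i v_i$ $(0\le i\le n)$; $dv_0=0$, $dv_i=\beta_i v_{i-1}$ $(1\le i\le n)$; $uv_n=0$, $uv_i=v_{i+1}$ $(0\le i\le n-1)$ (this is a simple $L$-module). Let $J_\lambda=\{f(h,ud)\in L_0: f\in\mathbb C[x,y],\ f(\lambda_i,\beta_i)=0 \text{ for } 0\le i\le n\}$. Then the annihilator of $F_{\mathrm{hw}}(\lambda)$ in $L$ is the two-sided ideal $\langle u^{n+1}, d^{n+1}, J_\lambda\rangle$.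
   Context: Let $r,s,\gamma\in\mathbb C$ with $rs\neq 0$ and $\phi\in\mathbb C[x]$. The generalized down-up algebra $L=L(\phi,r,s,\gamma)$ is the associative $\mathbb C$-algebra generated by $u,d,h$ subject to $hu-ruh=\gamma u$, $dh-rhd=\gamma d$, $du-sud=\phi(h)$; it is a noetherian domain with $\mathbb C$-basis $\{u^ih^jd^k: i,j,k\ge 0\}$. $L$ is $\mathbb Z$-graded by $\deg u=1$, $\deg d=-1$, $\deg h=0$; $L_i$ denotes the degree-$i$ component, and $L_0$ is the polynomial algebra $\mathbb C[h,ud]$ in the commuting elements $h$ and $ud$. $\langle a_1,\dots,a_k\rangle$ denotes the two-sided ideal generated by the listed elements (or sets). The map $\Phi:\mathbb C^2\to\mathbb C^2$ is $\Phi(\lambda,\beta)=(r\lambda+\gamma,\ s\beta+\phi(\lambda))$. *)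

(* Defs.v *)
From HB Require Import structures.
From mathcomp Require Import all_boot all_order all_algebra.
Set Implicit Arguments. Unset Strict Implicit. Unset Printing Implicit Defensive.
Import Order.TTheory GRing.Theory Num.Theory.
Local Open Scope ring_scope.

Definition peval (K : fieldType) (A : algType K) (phi : {poly K}) (x : A) : A :=
  \sum_(i < size phi) phi`_i *: x ^+ i.

Definition downup_relations (K : fieldType) (A : algType K)
    (phi : {poly K}) (r s gamma : K) (u d h : A) : Prop :=
  [/\ h * u - r *: (u * h) = gamma *: u,
      d * h - r *: (h * d) = gamma *: d &
      d * u - s *: (u * d) = peval phi h].

Definition pbw_basis (K : fieldType) (A : algType K) (u d h : A) : Prop :=
  (forall a : A, exists (N : nat) (c : nat -> nat -> nat -> K),
      a = \sum_(i < N) \sum_(j < N) \sum_(k < N)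
            c i j k *: (u ^+ i * h ^+ j * d ^+ k)) /\
  (forall (N : nat) (c : nat -> nat -> nat -> K),
      \sum_(i < N) \sum_(j < N) \sum_(k < N)
            c i j k *: (u ^+ i * h ^+ j * d ^+ k) = 0 ->
      forall i j k, (i < N)%N -> (j < N)%N -> (k < N)%N -> c i j k = 0).

(* A is (a presentation of) the generalized down-up algebra L(phi,r,s,gamma):
   generated by u,d,h subject to the relations, with PBW basis. *)
Definition is_downup_algebra (K : fieldType) (A : algType K)
    (phi : {poly K}) (r s gamma : K) (u d h : A) : Prop :=
  downup_relations phi r s gamma u d h /\ pbw_basis u d h.

Definition Phi (K : fieldType) (phi : {poly K}) (r s gamma : K) (p : K * K)
  : K * K := (r * p.1 + gamma, s * p.2 + phi.[p.1]).

Definition weight (K : fieldType) (phi : {poly K}) (r s gamma lam : K) (i : nat)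
  : K * K := iter i (Phi phi r s gamma) (lam, 0).

Definition in_ideal (K : fieldType) (A : algType K) (S : A -> Prop) (a : A)
  : Prop :=
  exists (m : nat) (x y z : 'I_m -> A),
    (forall i, S (z i)) /\ a = \sum_(i < m) x i * z i * y i.

Definition bieval_K (K : fieldType) (N : nat) (c : nat -> nat -> K) (x y : K)
  : K := \sum_(i < N) \sum_(j < N) c i j * x ^+ i * y ^+ j.

(* f(h, ud) in L_0 (h and ud commute in L). *)
Definition bieval_A (K : fieldType) (A : algType K) (N : nat)
    (c : nat -> nat -> K) (x y : A) : A :=
  \sum_(i < N) \sum_(j < N) c i j *: (x ^+ i * y ^+ j).

Definition J_lambda (K : fieldType) (A : algType K)
    (phi : {poly K}) (r s gamma lam : K) (n : nat) (u d h : A) (a : A) : Prop :=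
  exists (N : nat) (c : nat -> nat -> K),
    a = bieval_A N c h (u * d) /\
    forall i, (i <= n)%N ->
      bieval_K N c (weight phi r s gamma lam i).1
                   (weight phi r s gamma lam i).2 = 0.

Definition ann_generators (K : fieldType) (A : algType K)
    (phi : {poly K}) (r s gamma lam : K) (n : nat) (u d h : A) (a : A) : Prop :=
  a = u ^+ n.+1 \/ a = d ^+ n.+1 \/ J_lambda phi r s gamma lam n u d h a.

(* Matrices of u, d, h on F_hw(lambda) w.r.t. basis v_0..v_n (column vectors):
   u v_j = v_{j+1}, d v_j = beta_j v_{j-1}, h v_j = lambda_j v_j. *)
Definition Umx (K : fieldType) (n : nat) : 'M[K]_(n.+1) :=
  \matrix_(i, j) (if (i : nat) == j.+1 then 1 else 0).
Definition Dmx (K : fieldType) (phi : {poly K}) (r s gamma lam : K) (n : nat)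
  : 'M[K]_(n.+1) :=
  \matrix_(i, j) (if (j : nat) == i.+1 then (weight phi r s gamma lam j).2
                  else 0).
Definition Hmx (K : fieldType) (phi : {poly K}) (r s gamma lam : K) (n : nat)
  : 'M[K]_(n.+1) :=
  \matrix_(i, j) (if i == j then (weight phi r s gamma lam i).1 else 0).

(* Main.v *)
Require Import Defs.
From HB Require Import structures.
From mathcomp Require Import all_boot all_order all_algebra.
Set Implicit Arguments. Unset Strict Implicit. Unset Printing Implicit Defensive.
Import Order.TTheory GRing.Theory Num.Theory.
Local Open Scope ring_scope.

Lemma sum_only (V : nmodType) m (F : 'I_m -> V) (l0 : 'I_m) :
  (forall l, l != l0 -> F l = 0) -> \sum_(l < m) F l = F l0.
Proof.
move=> H; rewrite (bigD1 l0) //= big1 ?addr0 // => l /H //.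
Qed.

Lemma sum_none (V : nmodType) m (F : 'I_m -> V) :
  (forall l, F l = 0) -> \sum_(l < m) F l = 0.
Proof. by move=> H; rewrite big1. Qed.

Section Ideal.
Variables (K : fieldType) (A : algType K) (S : A -> Prop).
Local Notation I := (in_ideal S).

Lemma I0 : I 0.
Proof. by exists 0%N, (fun _ => 0), (fun _ => 0), (fun _ => 0); split => [[]//|]; rewrite big_ord0. Qed.

Lemma Iadd a b : I a -> I b -> I (a + b).
Proof.
move=> [m1 [x1 [y1 [z1 [H1 ->]]]]] [m2 [x2 [y2 [z2 [H2 ->]]]]].
pose f (X1 X2 : _ -> A) (i : 'I_(m1 + m2)) := match split i with inl j => X1 j | inr j => X2 j end.
exists (m1 + m2)%N, (f x1 x2), (f y1 y2), (f z1 z2); split.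
  by move=> i; rewrite /f; case: (split i).
rewrite big_split_ord /f; congr (_ + _); apply: eq_bigr => i _.
  by have := unsplitK (inl _ i) => /= ->.
by have := unsplitK (inr _ i) => /= ->.
Qed.

Lemma Imull x a : I a -> I (x * a).
Proof.
move=> [m [x1 [y1 [z1 [H1 ->]]]]]; exists m, (fun i => x * x1 i), y1, z1; split => //.
by rewrite mulr_sumr; apply: eq_bigr => i _; rewrite !mulrA.
Qed.

Lemma Imulr x a : I a -> I (a * x).
Proof.
move=> [m [x1 [y1 [z1 [H1 ->]]]]]; exists m, x1, (fun i => y1 i * x), z1; split => //.
by rewrite mulr_suml; apply: eq_bigr => i _; rewrite !mulrA.
Qed.

Lemma Iscale (c : K) a : I a -> I (c *: a).
Proof. move=> Ha; have -> : c *: a = (c *: 1) * a by rewrite -scalerAl mul1r.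
by apply: Imull. Qed.

Lemma Iopp a : I a -> I (- a).
Proof. by move=> Ha; rewrite -scaleN1r; apply: Iscale. Qed.

Lemma Isub a b : I a -> I b -> I (a - b).
Proof. by move=> Ha Hb; apply: Iadd => //; apply: Iopp. Qed.

Lemma Igen z : S z -> I z.
Proof.
move=> Hz; exists 1%N, (fun _ => 1), (fun _ => 1), (fun _ => z); split => //.
by rewrite big_ord1 mul1r mulr1.
Qed.

Lemma Isum m (F : 'I_m -> A) : (forall i, I (F i)) -> I (\sum_(i < m) F i).
Proof. by move=> H; apply: big_ind => //; [apply: I0 | apply: Iadd]. Qed.

End Ideal.


Section Alg.
Variables (K : fieldType) (A : algType K) (phi : {poly K}) (r s gamma : K) (u d h : A).
Hypothesis R1 : h * u - r *: (u * h) = gamma *: u.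
Hypothesis R2 : d * h - r *: (h * d) = gamma *: d.
Hypothesis R3 : d * u - s *: (u * d) = peval phi h.

Definition Rep (z : A) := exists N c, z = bieval_A N c h (u * d).

Lemma bieval_pad N M (c : nat -> nat -> K) (x y : A) : (N <= M)%N ->
  bieval_A M (fun i j => if (i < N)%N && (j < N)%N then c i j else 0) x y
  = bieval_A N c x y.
Proof.
move=> NM; rewrite /bieval_A.
rewrite (big_ord_widen M (fun i => \sum_(j < N) c i j *: (x ^+ i * y ^+ j))) //.
rewrite [RHS]big_mkcond; apply: eq_bigr => i _.
case: (i < N)%N => /=.
  rewrite (big_ord_widen M (fun j => c i j *: (x ^+ i * y ^+ j))) // [RHS]big_mkcond.
  by apply: eq_bigr => j _; case: (j < N)%N => //; rewrite scale0r.
by rewrite big1 // => j _; rewrite scale0r.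
Qed.

Lemma Rep0 : Rep 0.
Proof. by exists 0%N, (fun _ _ => 0); rewrite /bieval_A big_ord0. Qed.

Lemma Rep_add a b : Rep a -> Rep b -> Rep (a + b).
Proof.
move=> [N1 [c1 ->]] [N2 [c2 ->]].
exists (N1 + N2)%N, (fun i j => (if (i < N1)%N && (j < N1)%N then c1 i j else 0)
   + (if (i < N2)%N && (j < N2)%N then c2 i j else 0)).
rewrite -(@bieval_pad N1 (N1 + N2)) ?leq_addr // -(@bieval_pad N2 (N1 + N2)) ?leq_addl //.
rewrite /bieval_A -big_split; apply: eq_bigr => i _; rewrite -big_split.
by apply: eq_bigr => j _; rewrite scalerDl.
Qed.

Lemma Rep_scale (k : K) a : Rep a -> Rep (k *: a).
Proof.
move=> [N [c ->]]; exists N, (fun i j => k * c i j).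
rewrite /bieval_A scaler_sumr; apply: eq_bigr => i _; rewrite scaler_sumr.
by apply: eq_bigr => j _; rewrite scalerA.
Qed.

Lemma Rep_mono (k : K) a b : Rep (k *: (h ^+ a * (u * d) ^+ b)).
Proof.
exists (a + b).+1, (fun i j => if (i == a) && (j == b) then k else 0).
rewrite /bieval_A (sum_only (l0 := inord a)) ?inordK ?ltnS ?leq_addr //; last first.
  move=> l la; rewrite big1 // => j _.
  have -> : ((l : nat) == a) = false.
    by apply/negbTE; apply: contra la => /eqP E; apply/eqP/val_inj; rewrite /= inordK ?E // ltnS leq_addr.
  by rewrite scale0r.
rewrite (sum_only (l0 := inord b)) ?inordK ?ltnS ?leq_addl // ?eqxx //.
move=> l lb; have -> : ((l : nat) == b) = false.
  by apply/negbTE; apply: contra lb => /eqP E; apply/eqP/val_inj; rewrite /= inordK ?E // ltnS leq_addl.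
by rewrite andbF scale0r.
Qed.

Lemma Rep_sum m (F : 'I_m -> A) : (forall i, Rep (F i)) -> Rep (\sum_(i < m) F i).
Proof. by move=> H; apply: big_ind => //; [apply: Rep0 | apply: Rep_add]. Qed.

Lemma comm_hy : GRing.comm h (u * d).
Proof.
rewrite /GRing.comm.
have E1 : h * u = r *: (u * h) + gamma *: u by rewrite -R1 addrC subrK.
have E2 : d * h = r *: (h * d) + gamma *: d by rewrite -R2 addrC subrK.
by rewrite mulrA E1 -mulrA E2 mulrDl mulrDr -!scalerAl -!scalerAr !mulrA.
Qed.

Lemma Rep_mul a b : Rep a -> Rep b -> Rep (a * b).
Proof.
move=> [N1 [c1 ->]] [N2 [c2 ->]]; rewrite /bieval_A mulr_suml.
apply: Rep_sum => i; rewrite mulr_suml; apply: Rep_sum => j; rewrite mulr_sumr.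
apply: Rep_sum => k; rewrite mulr_sumr; apply: Rep_sum => l.
rewrite -scalerAl -scalerAr scalerA.
have -> : h ^+ i * (u * d) ^+ j * (h ^+ k * (u * d) ^+ l)
    = h ^+ (i + k) * (u * d) ^+ (j + l).
  rewrite mulrA -(mulrA (h ^+ i)).
  have C : GRing.comm ((u * d) ^+ j) (h ^+ k).
    by apply: commrX; apply/commr_sym; apply: commrX; apply: comm_hy.
  by rewrite C !mulrA -exprD -mulrA -exprD.
exact: Rep_mono.
Qed.

Lemma Rep1 : Rep 1.
Proof. by have := Rep_mono 1 0 0; rewrite !expr0 mulr1 scale1r. Qed.
Lemma Reph : Rep h.
Proof. by have := Rep_mono 1 1 0; rewrite !expr0 expr1 mulr1 scale1r. Qed.
Lemma Repy : Rep (u * d).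
Proof. by have := Rep_mono 1 0 1; rewrite !expr0 expr1 mul1r scale1r. Qed.

Lemma Rep_ind (P : A -> Prop) :
  P 0 -> P 1 -> P h -> P (u * d) ->
  (forall a b, P a -> P b -> P (a + b)) ->
  (forall (k : K) a, P a -> P (k *: a)) ->
  (forall a b, P a -> P b -> P (a * b)) ->
  forall z, Rep z -> P z.
Proof.
move=> P0 P1 Ph Py Padd Psc Pmul z [N [c ->]].
have Pexp : forall x k, P x -> P (x ^+ k).
  by move=> x k Px; elim: k => [|k IH]; rewrite ?expr0 // exprS; apply: Pmul.
apply: big_ind => // i _; apply: big_ind => // j _.
by apply: Psc; apply: Pmul; apply: Pexp.
Qed.

Lemma Rep_peval : Rep (peval phi h).
Proof.
rewrite /peval; apply: Rep_sum => i; apply: Rep_scale.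
elim: (nat_of_ord i) => [|k IH]; first by rewrite expr0; apply: Rep1.
by rewrite exprS; apply: Rep_mul => //; apply: Reph.
Qed.


Lemma E1 : h * u = u * (r *: h + gamma *: 1).
Proof. by rewrite mulrDr -scalerAr -scalerAr mulr1 -R1 addrC subrK. Qed.
Lemma E2 : d * h = (r *: h + gamma *: 1) * d.
Proof. by rewrite mulrDl -scalerAl -scalerAl mul1r -R2 addrC subrK. Qed.
Lemma E3 : d * u = s *: (u * d) + peval phi h.
Proof. by rewrite -R3 addrC subrK. Qed.

Lemma LemA z : Rep z -> exists z', Rep z' /\ z * u = u * z'.
Proof.
move: z; apply: (Rep_ind (P := fun z => exists z', Rep z' /\ z * u = u * z')).
- by exists 0; split; [apply: Rep0 | rewrite mul0r mulr0].
- by exists 1; split; [apply: Rep1 | rewrite mul1r mulr1].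
- exists (r *: h + gamma *: 1); split; last exact: E1.
  by apply: Rep_add; apply: Rep_scale; [apply: Reph | apply: Rep1].
- exists (s *: (u * d) + peval phi h); split; last by rewrite -mulrA E3.
  by apply: Rep_add; [apply: Rep_scale; apply: Repy | apply: Rep_peval].
- move=> a b [a' [Ha ea]] [b' [Hb eb]]; exists (a' + b'); split; first exact: Rep_add.
  by rewrite mulrDl mulrDr ea eb.
- move=> k a [a' [Ha ea]]; exists (k *: a'); split; first exact: Rep_scale.
  by rewrite -scalerAl ea scalerAr.
- move=> a b [a' [Ha ea]] [b' [Hb eb]]; exists (a' * b'); split; first exact: Rep_mul.
  by rewrite -mulrA eb mulrA ea mulrA.
Qed.

Lemma LemB z : Rep z -> exists z', Rep z' /\ d * z = z' * d.
Proof.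
move: z; apply: (Rep_ind (P := fun z => exists z', Rep z' /\ d * z = z' * d)).
- by exists 0; split; [apply: Rep0 | rewrite mul0r mulr0].
- by exists 1; split; [apply: Rep1 | rewrite mul1r mulr1].
- exists (r *: h + gamma *: 1); split; last exact: E2.
  by apply: Rep_add; apply: Rep_scale; [apply: Reph | apply: Rep1].
- exists (s *: (u * d) + peval phi h); split; last by rewrite mulrA E3.
  by apply: Rep_add; [apply: Rep_scale; apply: Repy | apply: Rep_peval].
- move=> a b [a' [Ha ea]] [b' [Hb eb]]; exists (a' + b'); split; first exact: Rep_add.
  by rewrite mulrDl mulrDr ea eb.
- move=> k a [a' [Ha ea]]; exists (k *: a'); split; first exact: Rep_scale.
  by rewrite -scalerAr ea scalerAl.
- move=> a b [a' [Ha ea]] [b' [Hb eb]]; exists (a' * b'); split; first exact: Rep_mul.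
  by rewrite mulrA ea -mulrA eb mulrA.
Qed.

Lemma LemA_pow p z : Rep z -> exists z', Rep z' /\ z * u ^+ p = u ^+ p * z'.
Proof.
elim: p z => [|p IH] z Hz; first by exists z; rewrite !expr0 mulr1 mul1r.
have [z1 [H1 e1]] := LemA Hz; have [z2 [H2 e2]] := IH _ H1.
by exists z2; split => //; rewrite exprS mulrA e1 -mulrA e2 mulrA.
Qed.

Lemma LemB_pow p z : Rep z -> exists z', Rep z' /\ d ^+ p * z = z' * d ^+ p.
Proof.
elim: p z => [|p IH] z Hz; first by exists z; rewrite !expr0 mulr1 mul1r.
have [z1 [H1 e1]] := LemB Hz; have [z2 [H2 e2]] := IH _ H1.
by exists z2; split => //; rewrite exprSr -mulrA e1 mulrA e2 mulrA.
Qed.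

Hypothesis hr : r != 0.
Hypothesis hs : s != 0.

Lemma peval_ind (P : A -> Prop) :
  P 0 -> P 1 -> P h ->
  (forall a b, P a -> P b -> P (a + b)) ->
  (forall (k : K) a, P a -> P (k *: a)) ->
  (forall a b, P a -> P b -> P (a * b)) -> P (peval phi h).
Proof.
move=> P0 P1 Ph Padd Psc Pmul; rewrite /peval; apply: big_ind => // i _.
apply: Psc; elim: (nat_of_ord i) => [|k IH]; first by rewrite expr0.
by rewrite exprS; apply: Pmul.
Qed.

Lemma LemA' z : Rep z -> exists z', Rep z' /\ u * z = z' * u.
Proof.
pose Q := fun z => exists z', Rep z' /\ u * z = z' * u.
have Q0 : Q 0 by exists 0; split; [apply: Rep0 | rewrite mul0r mulr0].
have Q1 : Q 1 by exists 1; split; [apply: Rep1 | rewrite mul1r mulr1].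
have Qh : Q h.
  exists (r^-1 *: h - (r^-1 * gamma) *: 1); split.
    by apply: Rep_add; [|rewrite -scaleN1r]; apply: Rep_scale; [apply: Reph | apply: Rep_scale; apply: Rep1].
  rewrite mulrBl -!scalerAl mul1r -scalerA -scalerBr.
  have -> : h * u - gamma *: u = r *: (u * h) by rewrite -R1 opprB addrC subrK.
  by rewrite scalerA mulVf // scale1r.
have Qadd : forall a b, Q a -> Q b -> Q (a + b).
  move=> a b [a' [Ha ea]] [b' [Hb eb]]; exists (a' + b'); split; first exact: Rep_add.
  by rewrite mulrDl mulrDr ea eb.
have Qsc : forall (k : K) a, Q a -> Q (k *: a).
  move=> k a [a' [Ha ea]]; exists (k *: a'); split; first exact: Rep_scale.
  by rewrite -scalerAr ea scalerAl.
have Qmul : forall a b, Q a -> Q b -> Q (a * b).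
  move=> a b [a' [Ha ea]] [b' [Hb eb]]; exists (a' * b'); split; first exact: Rep_mul.
  by rewrite mulrA ea -mulrA eb mulrA.
have Qy : Q (u * d).
  have [w [Hw ew]] : Q (peval phi h) by apply: peval_ind.
  exists (s^-1 *: (u * d - w)); split.
    by apply: Rep_scale; apply: Rep_add; [apply: Repy | rewrite -scaleN1r; apply: Rep_scale].
  rewrite -scalerAl mulrBl -ew -mulrA E3 mulrDr -scalerAr addrK.
  by rewrite scalerA mulVf // scale1r mulrA.
by move: z; apply: (Rep_ind (P := Q)).
Qed.

Lemma LemC p z : Rep z -> Rep (u ^+ p * z * d ^+ p).
Proof.
elim: p z => [|p IH] z Hz; first by rewrite !expr0 mulr1 mul1r.
have [z1 [H1 e1]] := LemA' Hz.
have -> : u ^+ p.+1 * z * d ^+ p.+1 = u ^+ p * (z1 * (u * d)) * d ^+ p.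
  by rewrite exprSr exprS -!mulrA (mulrA u z) e1 !mulrA.
by apply: IH; apply: Rep_mul => //; apply: Repy.
Qed.

Lemma LemD p z : Rep z -> Rep (d ^+ p * z * u ^+ p).
Proof.
elim: p z => [|p IH] z Hz; first by rewrite !expr0 mulr1 mul1r.
have [z1 [H1 e1]] := LemB Hz.
have -> : d ^+ p.+1 * z * u ^+ p.+1 = d ^+ p * (z1 * (d * u)) * u ^+ p.
  by rewrite exprSr exprS -!mulrA (mulrA d z) e1 !mulrA.
apply: IH; apply: Rep_mul => //; rewrite E3.
by apply: Rep_add; [apply: Rep_scale; apply: Repy | apply: Rep_peval].
Qed.

End Alg.


Section Mat.
Variables (K : fieldType) (n : nat).
Implicit Types (M N : 'M[K]_n.+1).

Lemma mulE M N i j : (M * N) i j = \sum_k M i k * N k j.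
Proof. by rewrite -mulmxE mxE. Qed.

Lemma oneE i j : (1 : 'M[K]_n.+1) i j = if i == j then 1 else 0.
Proof. by rewrite !mxE; case: (i == j). Qed.

Definition isdiag M := forall i j, i != j -> M i j = 0.

Lemma diag_mull M N i j : isdiag M -> (M * N) i j = M i i * N i j.
Proof.
move=> HM; rewrite mulE (sum_only (l0 := i)) // => l li.
by rewrite HM ?mul0r // eq_sym.
Qed.

Lemma diag_add M N : isdiag M -> isdiag N -> isdiag (M + N).
Proof. by move=> HM HN i j ij; rewrite mxE HM ?HN ?addr0. Qed.
Lemma diag_scale (c : K) M : isdiag M -> isdiag (c *: M).
Proof. by move=> HM i j ij; rewrite mxE HM ?mulr0. Qed.
Lemma diag_mul M N : isdiag M -> isdiag N -> isdiag (M * N).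
Proof. by move=> HM HN i j ij; rewrite diag_mull // HN ?mulr0. Qed.
Lemma diag_one : isdiag 1.
Proof. by move=> i j ij; rewrite oneE (negbTE ij). Qed.
Lemma diag_zero : isdiag 0.
Proof. by move=> i j ij; rewrite mxE. Qed.
Lemma diag_exp M k : isdiag M -> isdiag (M ^+ k).
Proof.
move=> HM; elim: k => [|k IH]; first by rewrite expr0; apply: diag_one.
by rewrite exprS; apply: diag_mul.
Qed.
Lemma diag_expE M k i : isdiag M -> (M ^+ k) i i = M i i ^+ k.
Proof.
move=> HM; elim: k => [|k IH]; first by rewrite !expr0 oneE eqxx.
by rewrite !exprS diag_mull // IH.
Qed.

End Mat.

Section W.
Variables (K : fieldType) (phi : {poly K}) (r s gamma lam : K) (n : nat).
Local Notation bt i := (weight phi r s gamma lam i).2.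
Local Notation lm i := (weight phi r s gamma lam i).1.
Local Notation U := (Umx K n).
Local Notation D := (Dmx phi r s gamma lam n).
Local Notation H := (Hmx phi r s gamma lam n).

Lemma U_pow p (a b : 'I_n.+1) : (U ^+ p) a b = if (a : nat) == (b + p)%N then 1 else 0.
Proof.
elim: p a b => [|p IH] a b.
  by rewrite expr0 oneE addn0; case: (a =P b) => [->|ab]; rewrite ?eqxx //; case: eqP => // /val_inj.
rewrite exprSr mulE.
case: (ltnP b.+1 n.+1) => hb.
  rewrite (sum_only (l0 := Ordinal hb)) => [|l lb]; last first.
    rewrite mxE; case: eqP => [E|]; last by rewrite mulr0.
    by case/eqP: lb; apply: val_inj.
  by rewrite mxE /= eqxx mulr1 IH /= addnS addSn.
rewrite sum_none => [|l]; last first.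
  rewrite mxE; case: eqP => [E|]; last by rewrite mulr0.
  by have := ltn_ord l; rewrite E ltnNge hb.
case: eqP => // E; have := ltn_ord a; rewrite E addnS ltnS.
by move/(leq_ltn_trans (leq_addr p b)); rewrite ltnNge -ltnS hb.
Qed.

Definition piD (a q : nat) := \prod_(k < q) bt (a + k).+1.

Lemma D_pow q (a b : 'I_n.+1) :
  (D ^+ q) a b = if (b : nat) == (a + q)%N then piD a q else 0.
Proof.
elim: q a b => [|q IH] a b.
  by rewrite expr0 oneE addn0 /piD big_ord0; case: (a =P b) => [->|ab]; rewrite ?eqxx //;
    case: eqP => // /esym /val_inj.
rewrite exprS mulE.
case: (ltnP a.+1 n.+1) => ha.
  rewrite (sum_only (l0 := Ordinal ha)); last first.
    move=> l la; rewrite mxE; case: eqP => [E|]; last by rewrite mul0r.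
    by case/eqP: la; apply: val_inj.
  rewrite mxE IH [nat_of_ord (Ordinal ha)]/= eqxx addSn addnS.
  case: eqP => _; last by rewrite mulr0.
  rewrite /piD big_ord_recl addn0; congr (_ * _).
  by apply: eq_bigr => k _; rewrite lift0 addSn addnS.
rewrite sum_none => [|l]; last first.
  rewrite mxE; case: eqP => [E|]; last by rewrite mul0r.
  by have := ltn_ord l; rewrite E ltnNge ha.
case: eqP => // E; have := ltn_ord b; rewrite E addnS ltnS.
by move/(leq_ltn_trans (leq_addr q a)); rewrite ltnNge -ltnS ha.
Qed.

Lemma U_nil : U ^+ n.+1 = 0.
Proof.
apply/matrixP => a b; rewrite U_pow mxE; case: eqP => // E.
by have := ltn_ord a; rewrite E addnS ltnS ltnNge leq_addl.
Qed.

Lemma D_nil : D ^+ n.+1 = 0.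
Proof.
apply/matrixP => a b; rewrite D_pow mxE; case: eqP => // E.
by have := ltn_ord b; rewrite E addnS ltnS ltnNge leq_addl.
Qed.

Lemma H_diag : isdiag H.
Proof. by move=> i j ij; rewrite mxE (negbTE ij). Qed.
Lemma H_E i : H i i = lm i.
Proof. by rewrite mxE eqxx. Qed.

Lemma UD_E i j : (U * D) i j = if i == j then bt i else 0.
Proof.
rewrite mulE; case: (posnP i) => [i0|ip].
  rewrite sum_none; last by move=> l; rewrite [U i l]mxE i0 mul0r.
  by case: eqP => // _; rewrite i0.
have hl : (i.-1 < n.+1)%N by rewrite (leq_ltn_trans (leq_pred i)).
rewrite (sum_only (l0 := Ordinal hl)) => [|l li]; last first.
  rewrite mxE; case: eqP => [E|]; last by rewrite mul0r.
  by case/eqP: li; apply: val_inj; rewrite /= E.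
rewrite !mxE /= prednK // eqxx mul1r.
case: (i =P j) => [<-|ij]; first by rewrite eqxx.
by case: ifP => // /eqP E; case: ij; apply: val_inj; rewrite /= E.
Qed.

Lemma UD_diag : isdiag (U * D).
Proof. by move=> i j ij; rewrite UD_E (negbTE ij). Qed.

End W.


Section Main.
Variables (K : fieldType) (A : algType K) (phi : {poly K}) (r s gamma : K) (u d h : A).
Hypothesis R1 : h * u - r *: (u * h) = gamma *: u.
Hypothesis R2 : d * h - r *: (h * d) = gamma *: d.
Hypothesis R3 : d * u - s *: (u * d) = peval phi h.
Hypothesis hr : r != 0.
Hypothesis hs : s != 0.
Variables (lam : K) (n : nat).
Local Notation bt i := (weight phi r s gamma lam i).2.
Local Notation lm i := (weight phi r s gamma lam i).1.
Hypothesis hbeta : forall i, (1 <= i <= n)%N -> bt i != 0.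
Local Notation U := (Umx K n).
Local Notation D := (Dmx phi r s gamma lam n).
Local Notation H := (Hmx phi r s gamma lam n).
Variable rho : A -> 'M[K]_(n.+1).
Hypothesis rho_add : forall a b, rho (a + b) = rho a + rho b.
Hypothesis rho_scale : forall (c : K) a, rho (c *: a) = c *: rho a.
Hypothesis rho_mul : forall a b, rho (a * b) = rho a * rho b.
Hypothesis rho_one : rho 1 = 1.
Hypothesis rho_u : rho u = U.
Hypothesis rho_d : rho d = D.
Hypothesis rho_h : rho h = H.

Local Notation Rp := (Rep u d h).
Local Notation I := (in_ideal (ann_generators phi r s gamma lam n u d h)).

Lemma RmulL a b : Rp a -> Rp b -> Rp (a * b). Proof. move=> Ha Hb; exact: (Rep_mul R1 R2 Ha Hb). Qed.
Lemma RpevL : Rp (peval phi h). Proof. exact: Rep_peval R1 R2. Qed.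
Lemma LemAp p z : Rp z -> exists z', Rp z' /\ z * u ^+ p = u ^+ p * z'.
Proof. move=> Hz; exact: (LemA_pow R1 R2 R3 p Hz). Qed.
Lemma LemBp p z : Rp z -> exists z', Rp z' /\ d ^+ p * z = z' * d ^+ p.
Proof. move=> Hz; exact: (LemB_pow R1 R2 R3 p Hz). Qed.
Lemma LemCL p z : Rp z -> Rp (u ^+ p * z * d ^+ p).
Proof. move=> Hz; exact: (LemC R1 R2 R3 hr hs p Hz). Qed.
Lemma LemDL p z : Rp z -> Rp (d ^+ p * z * u ^+ p).
Proof. move=> Hz; exact: (LemD R1 R2 R3 p Hz). Qed.

Lemma rho0 : rho 0 = 0.
Proof. by rewrite -(scale0r 0) rho_scale scale0r. Qed.
Lemma rho_sum m (F : 'I_m -> A) : rho (\sum_(i < m) F i) = \sum_(i < m) rho (F i).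
Proof. by apply: (big_morph rho rho_add rho0). Qed.
Lemma rho_exp x k : rho (x ^+ k) = rho x ^+ k.
Proof. by elim: k => [|k IH]; rewrite ?expr0 ?rho_one // !exprS rho_mul IH. Qed.
Lemma rho_sub a b : rho (a - b) = rho a - rho b.
Proof. by rewrite rho_add -scaleN1r rho_scale scaleN1r. Qed.

Lemma Rep_diag z : Rp z -> isdiag (rho z).
Proof.
move: z; apply: (Rep_ind (P := fun z => isdiag (rho z))).
- by rewrite rho0; apply: diag_zero.
- by rewrite rho_one; apply: diag_one.
- by rewrite rho_h; apply: H_diag.
- by rewrite rho_mul rho_u rho_d; apply: UD_diag.
- by move=> a b Ha Hb; rewrite rho_add; apply: diag_add.
- by move=> k a Ha; rewrite rho_scale; apply: diag_scale.
- by move=> a b Ha Hb; rewrite rho_mul; apply: diag_mul.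
Qed.

Lemma rho_bieval N c (i j : 'I_n.+1) :
  rho (bieval_A N c h (u * d)) i j = if i == j then bieval_K N c (lm i) (bt i) else 0.
Proof.
rewrite /bieval_A rho_sum summxE.
case: eqP => [<-|ij]; last first.
  rewrite big1 // => k _; rewrite rho_sum summxE big1 // => l _.
  rewrite rho_scale mxE rho_mul !rho_exp rho_h rho_mul rho_u rho_d.
  rewrite diag_mull; last by apply: diag_exp; apply: H_diag.
  by rewrite (diag_exp _ (@UD_diag _ _ _ _ _ _ _)) ?mulr0 //; apply/eqP.
rewrite /bieval_K; apply: eq_bigr => k _; rewrite rho_sum summxE; apply: eq_bigr => l _.
rewrite rho_scale mxE rho_mul !rho_exp rho_h rho_mul rho_u rho_d.
rewrite diag_mull; last by apply: diag_exp; apply: H_diag.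
rewrite !diag_expE ?H_E ?UD_E ?eqxx ?mulrA //; [apply: UD_diag | apply: H_diag].
Qed.


Lemma I_sound a : I a -> rho a = 0.
Proof.
move=> [m [x [y [z [Hz ->]]]]]; rewrite rho_sum big1 // => i _.
rewrite !rho_mul; suff -> : rho (z i) = 0 by rewrite mulr0 mul0r.
case: (Hz i) => [->|[->|[N [c [-> Hc]]]]].
- by rewrite rho_exp rho_u U_nil.
- by rewrite rho_exp rho_d D_nil.
apply/matrixP => a0 b0; rewrite rho_bieval mxE; case: eqP => // _.
by apply: Hc; rewrite -ltnS.
Qed.

Lemma I_J z : Rp z -> rho z = 0 -> I z.
Proof.
move=> [N [c ->]] H0; apply: Igen; right; right; exists N, c; split => // i hi.
have := rho_bieval N c (inord i) (inord i); rewrite H0 mxE eqxx inordK ?ltnS //.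
Qed.

Lemma I_u k : (n.+1 <= k)%N -> I (u ^+ k).
Proof.
move=> hk; rewrite -(subnK hk) exprD; apply: Imull; apply: Igen; by left.
Qed.

Lemma I_d k : (n.+1 <= k)%N -> I (d ^+ k).
Proof.
move=> hk; rewrite -(subnK hk) exprD; apply: Imull; apply: Igen; by right; left.
Qed.

(* the projection onto v_0 *)
Definition P0 : A := \prod_(j < n) (1 - (bt j.+1)^-1 *: (u * d)).

Lemma Rep_P0 : Rp P0.
Proof.
apply: big_ind => //; first exact: Rep1.
  by move=> a b; apply: RmulL.
move=> j _; apply: Rep_add; first exact: Rep1.
rewrite -scaleN1r; apply: Rep_scale; apply: Rep_scale; exact: Repy.
Qed.

Lemma P0E (i j : 'I_n.+1) :
  rho P0 i j = if ((i : nat) == 0%N) && ((j : nat) == 0%N) then 1 else 0.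
Proof.
have Hd := Rep_diag Rep_P0.
case: (i =P j) => [<-|ij]; last first.
  rewrite Hd; last by apply/eqP.
  case: eqP => //= i0; case: eqP => //= j0; case: ij; apply: val_inj => /=; by rewrite i0 j0.
rewrite andbb.
have -> : rho P0 i i = \prod_(k < n) (1 - (bt k.+1)^-1 * bt i).
  rewrite /P0; pose KK := fun (M : 'M[K]_n.+1) (x : K) => isdiag M /\ M i i = x.
  suff : KK (rho (\prod_(j < n) (1 - (bt j.+1)^-1 *: (u * d))))
            (\prod_(k < n) (1 - (bt k.+1)^-1 * bt i)) by case.
  rewrite (big_morph rho rho_mul rho_one).
  apply: (@big_ind2 _ _ KK).
  - by split; [apply: diag_one | rewrite oneE eqxx].
  - move=> M1 x1 M2 x2 [d1 e1] [d2 e2]; split; first exact: diag_mul.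
    by rewrite diag_mull // e1 e2.
  - move=> k _; rewrite rho_sub rho_one rho_scale rho_mul rho_u rho_d; split.
      apply: diag_add; first exact: diag_one.
      rewrite -scaleN1r; apply: diag_scale; apply: diag_scale; apply: UD_diag.
    by rewrite !mxE -mulE UD_E !eqxx.
case: (posnP i) => [i0|ip].
  rewrite i0 big1 // => k _.
  have -> : bt 0 = 0 by []. by rewrite mulr0 subr0.

have hk : (i.-1 < n)%N by rewrite -ltnS prednK // ltn_ord.
have e : (nat_of_ord (Ordinal hk)).+1 = i by rewrite /= prednK.
rewrite (bigD1 (Ordinal hk)) // e mulVf ?subrr ?mul0r //.
  exact: mul0r.
by apply: hbeta; rewrite ip -ltnS ltn_ord.
Qed.


Local Notation pi q := (piD phi r s gamma lam 0 q).

Lemma pi_neq0 q : (q <= n)%N -> pi q != 0.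
Proof.
move=> hq; rewrite /piD; apply/prodf_neq0 => k _; apply: hbeta.
by rewrite add0n /= (leq_trans _ hq).
Qed.

Lemma rhoP0_mul X (i j : 'I_n.+1) :
  (rho P0 * X) i j = if (i : nat) == 0%N then X ord0 j else 0.
Proof.
rewrite mulE (sum_only (l0 := ord0)) => [|l l0]; last first.
  rewrite P0E; case: ifP => [/andP [_ /eqP E]|_]; last by rewrite mul0r.
  by case/eqP: l0; apply: val_inj.
by rewrite P0E andbT; case: eqP => _; rewrite ?mul1r ?mul0r.
Qed.

Definition e (p q : nat) : A := u ^+ p * P0 * d ^+ q.

Lemma rho_e p q (a b : 'I_n.+1) :
  rho (e p q) a b = if ((a : nat) == p) && ((b : nat) == q) then pi q else 0.
Proof.
rewrite /e !rho_mul !rho_exp rho_u rho_d -mulrA mulE.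
rewrite (sum_only (l0 := ord0)) => [|l l0]; last first.
  rewrite rhoP0_mul; case: eqP => [E|]; last by rewrite mulr0.
  by case/eqP: l0; apply: val_inj.
rewrite rhoP0_mul eqxx U_pow D_pow !add0n.
by case: eqP => _; case: eqP => _; rewrite ?mul1r ?mul0r.
Qed.

Lemma rho_comb (c : nat -> nat -> K) (a b : 'I_n.+1) :
  rho (\sum_(p < n.+1) \sum_(q < n.+1) c p q *: e p q) a b = c a b * pi b.
Proof.
rewrite rho_sum summxE (sum_only (l0 := a)) => [|p pa]; last first.
  rewrite rho_sum summxE big1 // => q _; rewrite rho_scale mxE rho_e.
  case: eqP => [E|]; last by rewrite mulr0.
  by case/eqP: pa; apply: val_inj.
rewrite rho_sum summxE (sum_only (l0 := b)) => [|q qb]; last first.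
  rewrite rho_scale mxE rho_e eqxx /=; case: eqP => [E|]; last by rewrite mulr0.
  by case/eqP: qb; apply: val_inj.
by rewrite rho_scale mxE rho_e !eqxx.
Qed.

Definition Q (a : A) := exists c : nat -> nat -> K,
  I (a - \sum_(p < n.+1) \sum_(q < n.+1) c p q *: e p q).

Lemma Q_I a : I a -> Q a.
Proof.
move=> Ia; exists (fun _ _ => 0).
by rewrite big1 ?subr0 // => p _; rewrite big1 // => q _; rewrite scale0r.
Qed.

Lemma Q_add a b : Q a -> Q b -> Q (a + b).
Proof.
move=> [c1 H1] [c2 H2]; exists (fun p q => c1 p q + c2 p q).
have -> : a + b - \sum_(p < n.+1) \sum_(q < n.+1) (c1 p q + c2 p q) *: e p q =
  (a - \sum_(p < n.+1) \sum_(q < n.+1) c1 p q *: e p q) +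
  (b - \sum_(p < n.+1) \sum_(q < n.+1) c2 p q *: e p q).
  rewrite addrACA -opprD -big_split /=; congr (_ - _); apply: eq_bigr => p _.
  by rewrite -big_split; apply: eq_bigr => q _; rewrite scalerDl.
exact: Iadd.
Qed.

Lemma Q_scale (k : K) a : Q a -> Q (k *: a).
Proof.
move=> [c H1]; exists (fun p q => k * c p q).
have -> : k *: a - \sum_(p < n.+1) \sum_(q < n.+1) (k * c p q) *: e p q =
  k *: (a - \sum_(p < n.+1) \sum_(q < n.+1) c p q *: e p q).
  rewrite scalerBr scaler_sumr; congr (_ - _); apply: eq_bigr => p _.
  by rewrite scaler_sumr; apply: eq_bigr => q _; rewrite scalerA.
exact: Iscale.
Qed.

Lemma Q_sum m (F : 'I_m -> A) : (forall i, Q (F i)) -> Q (\sum_(i < m) F i).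
Proof. by move=> HF; apply: big_ind => //; [apply: Q_I; apply: I0 | apply: Q_add]. Qed.

Lemma Q_e p q : (p <= n)%N -> (q <= n)%N -> Q (e p q).
Proof.
move=> hp hq; exists (fun p' q' => if (p' == p) && (q' == q) then 1 else 0).
rewrite (sum_only (l0 := Ordinal (hp : (p < n.+1)%N))) => [|p' pp]; last first.
  rewrite big1 // => q' _; case: eqP => [E|]; last by rewrite scale0r.
  by case/eqP: pp; apply: val_inj.
rewrite (sum_only (l0 := Ordinal (hq : (q < n.+1)%N))) => [|q' qq]; last first.
  rewrite eqxx /=; case: eqP => [E|]; last by rewrite scale0r.
  by case/eqP: qq; apply: val_inj.
by rewrite !eqxx scale1r subrr; apply: I0.
Qed.


Lemma subE (M N : 'M[K]_n.+1) i j : (M - N) i j = M i j - N i j.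
Proof. by rewrite !mxE. Qed.
Lemma scaleE (k : K) (M : 'M[K]_n.+1) i j : (k *: M) i j = k * M i j.
Proof. by rewrite !mxE. Qed.

Lemma Q_w p q w : Rp w -> (p <= n)%N -> (q <= n)%N -> Q (u ^+ p * w * P0 * d ^+ q).
Proof.
move=> Hw hp hq; set c := rho w ord0 ord0.
have HJ : I (w * P0 - c *: P0).
  apply: I_J.
    apply: Rep_add; first exact: RmulL Hw Rep_P0.
    by rewrite -scaleN1r; apply: Rep_scale; apply: Rep_scale; apply: Rep_P0.
  rewrite rho_sub rho_mul rho_scale; apply/matrixP => i j.
  rewrite subE scaleE diag_mull ?P0E; last exact: Rep_diag.
  rewrite [RHS]mxE; case: ifP => [/andP [/eqP i0 _]|_]; last by rewrite !mulr0 subrr.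
  have -> : i = ord0 by apply: val_inj.
  by rewrite subrr.
have -> : u ^+ p * w * P0 * d ^+ q = u ^+ p * (w * P0 - c *: P0) * d ^+ q + c *: e p q.
  by rewrite /e mulrBr mulrBl -scalerAr -scalerAl subrK !mulrA.
apply: Q_add; first by apply: Q_I; apply: Imulr; apply: Imull.
by apply: Q_scale; apply: Q_e.
Qed.

Lemma Q_left x a : (forall p q, (p <= n)%N -> (q <= n)%N -> Q (x * e p q)) ->
  Q a -> Q (x * a).
Proof.
move=> Hx [c Hc].
set S := \sum_(p < n.+1) \sum_(q < n.+1) c p q *: e p q.
have E1 : \sum_(p < n.+1) \sum_(q < n.+1) c p q *: (x * e p q) = x * S.
  rewrite /S mulr_sumr; apply: eq_bigr => p _; rewrite mulr_sumr.
  by apply: eq_bigr => q _; rewrite scalerAr.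
have -> : x * a = x * (a - S) + x * S by rewrite -mulrDr subrK.
rewrite -E1; apply: Q_add; first by apply: Q_I; apply: Imull.
apply: Q_sum => p; apply: Q_sum => q; apply: Q_scale; apply: Hx; by rewrite -ltnS.
Qed.

Lemma Q_pow x k a : (forall p q, (p <= n)%N -> (q <= n)%N -> Q (x * e p q)) ->
  Q a -> Q (x ^+ k * a).
Proof.
move=> Hx Qa; elim: k => [|k IH]; first by rewrite expr0 mul1r.
by rewrite exprS -mulrA; apply: Q_left.
Qed.

Lemma Q_h p q : (p <= n)%N -> (q <= n)%N -> Q (h * e p q).
Proof.
move=> hp hq; have [z [Hz ez]] := LemAp p (Reph u d h).
by rewrite /e !mulrA ez; apply: Q_w.
Qed.

Lemma Q_u p q : (p <= n)%N -> (q <= n)%N -> Q (u * e p q).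
Proof.
move=> hp hq; rewrite /e !mulrA -exprS.
case: (ltnP p n) => hpn; first by apply: Q_e.
apply: Q_I; apply: Imulr; apply: Imulr; apply: I_u; by rewrite ltnS.
Qed.

Lemma I_dP0 : I (d * P0).
Proof.
set k := (pi n)^-1.
set Y := P0 * (d ^+ n * 1 * u ^+ n).
have HJ : I (P0 - k *: Y).
  apply: I_J.
    apply: Rep_add; first exact: Rep_P0.
    rewrite -scaleN1r; apply: Rep_scale; apply: Rep_scale.
    by apply: RmulL; [apply: Rep_P0 | apply: LemDL; apply: Rep1].
  rewrite rho_sub rho_scale /Y rho_mul !rho_mul !rho_exp rho_d rho_u rho_one mulr1.
  apply/matrixP => i j; rewrite subE scaleE rhoP0_mul mulE.
  rewrite (sum_only (l0 := ord_max)) => [|l lm]; last first.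
    rewrite D_pow add0n; case: eqP => [E|]; last by rewrite mul0r.
    by case/eqP: lm; apply: val_inj.
  rewrite D_pow U_pow add0n eqxx P0E [RHS]mxE.
  case: (i =P 0%N :> nat) => [i0|i0] /=; last by rewrite mulr0 subrr.
  case: (j =P 0%N :> nat) => [j0|j0] /=.
    by rewrite j0 add0n eqxx mulr1 mulVf ?subrr //; apply: pi_neq0.
  have -> : ((n == j + n)%N) = false.
    by apply/negbTE; apply/eqP => E; apply: j0; apply/eqP; rewrite -(eqn_add2r n) -E.
  by rewrite mulr0 mulr0 subrr.
have [P' [HP' eP']] := LemBp 1 Rep_P0.
have -> : d * P0 = d * (P0 - k *: Y) + k *: (P' * d ^+ n.+1 * u ^+ n).
  have eP1 : d * P0 = P' * d by move: eP'; rewrite !expr1.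
  have eY : d * Y = P' * d ^+ n.+1 * u ^+ n.
    by rewrite /Y mulr1 !mulrA eP1 -(mulrA P' d) -exprS.
  by rewrite mulrBr -scalerAr eY subrK.
apply: Iadd; first by apply: Imull.
by apply: Iscale; apply: Imulr; apply: Imull; apply: I_d.
Qed.

Lemma Q_d p q : (p <= n)%N -> (q <= n)%N -> Q (d * e p q).
Proof.
move=> hp hq; case: p hp => [|p] hp.
  by rewrite /e expr0 mul1r mulrA; apply: Q_I; apply: Imulr; apply: I_dP0.
have Hw : Rp (d * u).
  rewrite (E3 R3); apply: Rep_add; [apply: Rep_scale; apply: Repy | apply: RpevL].
have [z [Hz ez]] := LemAp p Hw.
rewrite /e exprS !mulrA [d * u * u ^+ p]ez.
by apply: Q_w => //; apply: ltnW.
Qed.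

Lemma Q_one : Q 1.
Proof.
exists (fun p q => if p == q then (pi p)^-1 else 0).
apply: I_J.
  apply: Rep_add; first exact: Rep1.
  rewrite -scaleN1r; apply: Rep_scale; apply: Rep_sum => p; apply: Rep_sum => q.
  case: eqP => [E|_]; last by rewrite scale0r; apply: Rep0.
  by apply: Rep_scale; rewrite /e -E; apply: LemCL; apply: Rep_P0.
rewrite rho_sub rho_one; apply/matrixP => a b; rewrite subE (rho_comb (fun p q => if p == q then (pi p)^-1 else 0)) oneE [RHS]mxE.
case: (a =P b) => [<-|ab]; first by rewrite eqxx mulVf ?subrr //; apply: pi_neq0; rewrite -ltnS.
have -> : ((a : nat) == b) = false by apply/negbTE; apply/eqP => E; apply: ab; apply: val_inj.
by rewrite mul0r subrr.
Qed.

Lemma ann_main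
  (hspan : forall a : A, exists (N : nat) (c : nat -> nat -> nat -> K),
      a = \sum_(i < N) \sum_(j < N) \sum_(k < N)
            c i j k *: (u ^+ i * h ^+ j * d ^+ k)) :
  forall a, rho a = 0 <-> I a.
Proof.
move=> a; split; last exact: I_sound.
move=> ra.
have [c Ic] : Q a.
  have [N [c ->]] := hspan a.
  apply: Q_sum => i; apply: Q_sum => j; apply: Q_sum => k; apply: Q_scale.
  have -> : u ^+ i * h ^+ j * d ^+ k = u ^+ i * (h ^+ j * (d ^+ k * 1)) by rewrite mulr1 mulrA.
  apply: Q_pow; first exact: Q_u.
  apply: Q_pow; first exact: Q_h.
  apply: Q_pow; first exact: Q_d.
  exact: Q_one.
have rE : rho (\sum_(p < n.+1) \sum_(q < n.+1) c p q *: e p q) = 0.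
  by have := I_sound Ic; rewrite rho_sub ra sub0r => /eqP; rewrite oppr_eq0 => /eqP.
have c0 : forall p q : 'I_n.+1, c p q = 0.
  move=> p q; have := rho_comb c p q; rewrite rE mxE => /esym /eqP.
  rewrite mulf_eq0 (negbTE (pi_neq0 _)) ?orbF; first by move/eqP.
  by rewrite -ltnS.
move: Ic; rewrite big1 ?subr0 // => p _; rewrite big1 // => q _.
by rewrite c0 scale0r.
Qed.

End Main.


Theorem mainTheorem1
    (K : numClosedFieldType) (A : algType K)
    (phi : {poly K}) (r s gamma : K) (u d h : A)
    (hr : r != 0) (hs : s != 0)
    (hL : is_downup_algebra phi r s gamma u d h)
    (lam : K) (n : nat)
    (hdist : forall i j, (i <= n)%N -> (j <= n)%N -> i <> j ->
        weight phi r s gamma lam i <> weight phi r s gamma lam j)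
    (hbeta : forall i, (1 <= i <= n)%N -> (weight phi r s gamma lam i).2 != 0)
    (hbeta_end : (weight phi r s gamma lam n.+1).2 = 0)
    (rho : A -> 'M[K]_(n.+1))
    (rho_add : forall a b, rho (a + b) = rho a + rho b)
    (rho_scale : forall (c : K) a, rho (c *: a) = c *: rho a)
    (rho_mul : forall a b, rho (a * b) = rho a * rho b)
    (rho_one : rho 1 = 1)
    (rho_u : rho u = Umx K n)
    (rho_d : rho d = Dmx phi r s gamma lam n)
    (rho_h : rho h = Hmx phi r s gamma lam n) :
  forall a : A,
    rho a = 0 <-> in_ideal (ann_generators phi r s gamma lam n u d h) a.
Proof.
move: hL => [[R1 R2 R3] [hspan _]].
exact: (ann_main R1 R2 R3 hr hs hbeta rho_add rho_scale rho_mul rho_one rho_u rho_d rho_h hspan).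
Qed.
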